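(* Let $\{G_i\}_{i\in I}$ be a family of Hausdorff topological groups. Assume that each $G_i$ contains a closed, extremely amenable, co-precompact subgroup $H_i$ such that the universal minimal flow of $G_i$ is (isomorphic, as a $G_i$-flow, to) the completion $\widehat{G_i/H_i}$. Then the universal minimal flow of the product group commutes with the product: $$\mathrm{UMF}\Big(\prod_{i} G_i\Big) = \prod_{i} \mathrm{UMF}(G_i).$$
   Context: A flow of a topological group $G$ is a nonempty compact (Hausdorff) space with a jointly continuous $G$-action; it is minimal if every orbit is dense. The universal minimal flow $\mathrm{UMF}(G)$ is the (unique up to isomorphism) minimal flow admitting a $G$-equivariant continuous surjection onto every minimal flow. A topological group is extremely amenable if every continuous action on a nonempty compact space has a fixed point. The right uniform structure on $G$ has basis of entourages $\{(x,y) \mid x\in Uy\}$, $U$ ranging over identity neighbourhoods. A closed subgroup $H\le G$ is co-precompact if the coset space $G/H$, endowed with the quotient of the right uniform structure of $G$, is precompact; $\widehat{G/H}$ denotes its (Hausdorff) completion, a compact $G$-space. *)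

(* Defs.v *)
From HB Require Import structures.
From mathcomp Require Import all_boot all_order all_algebra.
From mathcomp Require Import all_classical all_reals all_analysis.

Set Implicit Arguments.
Unset Strict Implicit.
Unset Printing Implicit Defensive.

Import Order.TTheory GRing.Theory Num.Theory.
Local Open Scope classical_set_scope.

Definition is_top_group (G : topologicalType) (mul : G -> G -> G)
    (inv : G -> G) (one : G) : Prop :=
  [/\ (forall x y z, mul x (mul y z) = mul (mul x y) z),
      (forall x, mul one x = x),
      (forall x, mul (inv x) x = one),
      continuous (fun p : G * G => mul p.1 p.2) &
      continuous inv].

Definition is_flow (G : topologicalType) (mul : G -> G -> G) (one : G)
    (X : topologicalType) (act : G -> X -> X) : Prop :=
  [/\ [/\ hausdorff_space X, compact [set: X] & (exists x : X, True)],
      (forall x, act one x = x),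
      (forall g h x, act (mul g h) x = act g (act h x)) &
      continuous (fun p : G * X => act p.1 p.2)].

Definition is_minimal (G : topologicalType) (X : topologicalType)
    (act : G -> X -> X) : Prop :=
  forall x : X, closure (range (fun g => act g x)) = [set: X].

Definition is_UMF (G : topologicalType) (mul : G -> G -> G) (one : G)
    (X : topologicalType) (act : G -> X -> X) : Prop :=
  [/\ is_flow mul one act, is_minimal act &
    forall (Y : topologicalType) (actY : G -> Y -> Y),
      is_flow mul one actY -> is_minimal actY ->
      exists f : X -> Y, [/\ continuous f,
        (forall g x, f (act g x) = actY g (f x)) &
        f @` [set: X] = [set: Y]]].

Definition is_closed_subgroup (G : topologicalType) (mul : G -> G -> G)
    (inv : G -> G) (one : G) (H : set G) : Prop :=
  [/\ closed H, H one, (forall x y, H x -> H y -> H (mul x y)) &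
      (forall x, H x -> H (inv x))].

(** An action of H is encoded by a map defined on all of G of
    which only the restriction to H matters. *)
Definition extremely_amenable_sub (G : topologicalType) (mul : G -> G -> G)
    (one : G) (H : set G) : Prop :=
  forall (X : topologicalType) (act : G -> X -> X),
    hausdorff_space X -> compact [set: X] -> (exists x : X, True) ->
    (forall x, act one x = x) ->
    (forall g h x, H g -> H h -> act (mul g h) x = act g (act h x)) ->
    {within H `*` [set: X], continuous (fun p : G * X => act p.1 p.2)} ->
    exists x : X, forall h, H h -> act h x = x.

Definition in_UyH (G : Type) (mul : G -> G -> G) (H : set G) (U : set G)
    (x y : G) : Prop :=
  exists u h, [/\ U u, H h & x = mul u (mul y h)].

(** Co-precompactness: G/H with the quotient of the right uniformity
    (basic entourages {(xH, yH) | x \in U y H}, U an identity neighbourhood)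
    is precompact: finitely many U-balls cover G/H. *)
Definition co_precompact (G : topologicalType) (mul : G -> G -> G)
    (one : G) (H : set G) : Prop :=
  forall U : set G, nbhs one U ->
    exists F : set G, finite_set F /\
      forall x : G, exists2 y, F y & in_UyH mul H U x y.

(** The G-flow (M, act) is (isomorphic as a G-flow to) the Hausdorff
    completion of G/H: there is a G-equivariant map j : G -> M (factoring
    through G/H) with dense image, such that the induced map G/H -> M
    induces exactly the quotient right uniformity of G/H (i.e. it is a
    uniform embedding up to separation).  Since M is a compact Hausdorff
    (hence complete separated) uniform space, this is the universal
    characterization of the completion of G/H; equivariance on the dense
    image identifies the action with the extension of left translation. *)
Definition is_completion_of_coset_space (G : topologicalType)
    (mul : G -> G -> G) (one : G) (H : set G)
    (M : uniformType) (act : G -> M -> M) : Prop :=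
  exists j : G -> M,
    [/\ (forall g x, j (mul g x) = act g (j x)),
        closure (range j) = [set: M],
        (forall E, entourage E -> exists U : set G, nbhs one U /\
           forall x y, in_UyH mul H U x y -> E (j x, j y)) &
        (forall U : set G, nbhs one U -> exists E, entourage E /\
           forall x y, E (j x, j y) -> in_UyH mul H U x y)].

Definition prod_mul (I : Type) (G : I -> topologicalType)
    (mul : forall i, G i -> G i -> G i) :
    prod_topology G -> prod_topology G -> prod_topology G :=
  fun f g i => mul i (f i) (g i).

Definition prod_one (I : Type) (G : I -> topologicalType)
    (one : forall i, G i) : prod_topology G := fun i => one i.

Definition prod_act (I : Type) (G : I -> topologicalType)
    (M : I -> uniformType) (act : forall i, G i -> M i -> M i) :
    prod_topology G -> prod_topology M -> prod_topology M :=
  fun g x i => act i (g i) (x i).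

(* Main.v *)
Require Import Defs.
From HB Require Import structures.
From mathcomp Require Import all_boot all_order all_algebra.
From mathcomp Require Import all_classical all_reals all_analysis.
Set Implicit Arguments.
Unset Strict Implicit.
Unset Printing Implicit Defensive.
Local Open Scope classical_set_scope.
Lemma dchoice (A : Type) (B : A -> Type) (P : forall a, B a -> Prop) :
  (forall a, exists b, P a b) -> exists f : forall a, B a, forall a, P a (f a).
Proof.
move=> h; exists (fun a => proj1_sig (cid (h a))) => a.
exact: (proj2_sig (cid (h a))).
Qed.

Lemma initial_cvgP (S : choiceType) (T : topologicalType) (w : S -> T)
  (F : set_system S) (s : S) : Filter F ->
  (F --> (s : initial_topology w)) <-> (w @ F --> w s).
Proof.
move=> FF; split.
  move=> Fs A /(@initial_continuous _ _ w) nA; exact: Fs nA.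
move=> wF A /=; rewrite nbhsE.
move=> [V0 [[B oB <-] Bs] OA].
apply: (filterS OA); apply: wF; exact: open_nbhs_nbhs.
Qed.

Lemma prod_cvgP (I : Type) (K : I -> topologicalType)
  (F : set_system (prod_topology K)) (f : prod_topology K) : Filter F ->
  F --> f <-> forall i, (fun g : prod_topology K => g i) @ F --> f i.
Proof.
move=> FF.
have := @cvg_sup (prod_topology K) I (fun i => Topological.class
    (initial_topology (fun f : (forall i, K i) => f i))) F f FF.
move=> ->; split => H i; apply/(@initial_cvgP _ _ (fun f : (forall i, K i) => f i)); exact: H.
Qed.

Lemma comp_fst_cvg (T U V : topologicalType) (h : T -> V) (p : T * U) :
  {for p.1, continuous h} -> (fun q : T * U => h q.1) @ nbhs p --> h p.1.
Proof. move=> ch A nA; exact: (@cvg_fst _ _ (nbhs p.1) (nbhs p.2) _ _ (ch A nA)). Qed.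

Lemma comp_snd_cvg (T U V : topologicalType) (h : U -> V) (p : T * U) :
  {for p.2, continuous h} -> (fun q : T * U => h q.2) @ nbhs p --> h p.2.
Proof. move=> ch A nA; exact: (@cvg_snd _ _ (nbhs p.1) (nbhs p.2) _ _ (ch A nA)). Qed.

Section Box.
Variables (I : Type) (K : I -> topologicalType).

Lemma proj_cvg (f : prod_topology K) (i : I) :
  (fun g : prod_topology K => g i) @ nbhs f --> f i.
Proof. by move: (@cvg_id _ (nbhs f)); move/(prod_cvgP _ _) => /(_ i). Qed.

Lemma box_nbhs (f : prod_topology K) (L : seq {classic I})
  (W : forall i, set (K i)) : (forall i, nbhs (f i) (W i)) ->
  nbhs f [set g : prod_topology K | forall i, i \in L -> W i (g i)].
Proof.
move=> nW; elim: L => [|i L IH].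
  by apply: filterS (filterT); move=> g _ i; rewrite in_nil.
have ni : nbhs f [set g : prod_topology K | W i (g i)] by exact: proj_cvg.
apply: filterS (filterI ni IH) => g [gi gL] k; rewrite in_cons.
by case/orP => [/eqP -> //|]; exact: gL.
Qed.

Lemma nbhs_box (f : prod_topology K) (U : set (prod_topology K)) :
  nbhs f U -> exists (L : seq {classic I}) (W : forall i, set (K i)),
   (forall i, nbhs (f i) (W i)) /\
   (forall g : prod_topology K, (forall i, i \in L -> W i (g i)) -> U g).
Proof.
pose B : set_system (prod_topology K) := fun U =>
  exists (L : seq {classic I}) (W : forall i, set (K i)),
   (forall i, nbhs (f i) (W i)) /\
   (forall g : prod_topology K, (forall i, i \in L -> W i (g i)) -> U g).
have FB : Filter B.
  split.
  - exists [::], (fun i => setT); split => // i; exact: filterT.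
  - move=> P Q [L1 [W1 [n1 s1]]] [L2 [W2 [n2 s2]]].
    exists (L1 ++ L2), (fun i => W1 i `&` W2 i); split.
      by move=> i; apply: filterI.
    move=> g Hg; split.
      by apply: s1 => i iL; case: (Hg i _) => //; rewrite mem_cat iL.
    by apply: s2 => i iL; case: (Hg i _) => //; rewrite mem_cat iL orbT.
  - by move=> P Q PQ [L [W [n s]]]; exists L, W; split => // g /s /PQ.
have : B --> f.
  apply/(prod_cvgP _ _) => i A nA.
  exists [:: (i : {classic I})], (@dfwith {classic I} (fun j => set (K j)) (fun j => setT) i A).
  split.
    move=> j; have [<-|ne] := eqVneq (i : {classic I}) (j : {classic I}).
      by rewrite dfwithin.
    by rewrite dfwithout //; exact: filterT.
  move=> g /(_ i); rewrite mem_seq1 eqxx dfwithin; exact.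
by move=> Bf; apply: Bf.
Qed.

Lemma prod_dense (E : forall i, set (K i)) :
  (forall i, closure (E i) = setT) ->
  closure [set f : prod_topology K | forall i, E i (f i)] = setT.
Proof.
move=> dE; apply/seteqP; split => // m _ U nU.
have [L [W [nW sW]]] := nbhs_box nU.
have : forall i, exists e : K i, E i e /\ W i e.
  move=> i; have : closure (E i) (m i) by rewrite dE.
  by move=> /(_ _ (nW i)) [e [? ?]]; exists e.
move=> /(@dchoice _ _ (fun i (e : K i) => E i e /\ W i e)) [e he].
exists e; split; first by move=> i; case: (he i).
by apply: sW => i _; case: (he i).
Qed.

End Box.

Unset Implicit Arguments.
Section Main.
Variables (I : Type) (G : I -> topologicalType)
    (mul : forall i, G i -> G i -> G i) (inv : forall i, G i -> G i)
    (one : forall i, G i) (H : forall i, set (G i))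
    (M : I -> uniformType) (act : forall i, G i -> M i -> M i).
Hypothesis hgrp : forall i, is_top_group (mul i) (inv i) (one i).
Hypothesis hUMF : forall i, is_UMF (mul i) (one i) (act i).

Local Notation GG := (prod_topology G).
Local Notation PM := (prod_topology M).

Lemma mulA i x y z : mul i x (mul i y z) = mul i (mul i x y) z.
Proof. by case: (hgrp i). Qed.
Lemma mul1g i x : mul i (one i) x = x.
Proof. by case: (hgrp i). Qed.
Lemma mulVg i x : mul i (inv i x) x = one i.
Proof. by case: (hgrp i). Qed.
Lemma mulgV i x : mul i x (inv i x) = one i.
Proof.
set y := inv i x.
have h1 : mul i y (mul i x y) = y by rewrite mulA mulVg mul1g.
by rewrite -[LHS]mul1g -(mulVg i y) -mulA h1 mulVg.
Qed.
Lemma mulg1 i x : mul i x (one i) = x.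
Proof. by rewrite -(mulVg i x) mulA mulgV mul1g. Qed.

Lemma flow_i i : is_flow (mul i) (one i) (act i).
Proof. by case: (hUMF i). Qed.
Lemma minimal_i i : is_minimal (act i).
Proof. by case: (hUMF i). Qed.

Lemma hausdorff_i i : hausdorff_space (M i).
Proof. by have [[]] := flow_i i. Qed.
Lemma compact_i i : compact [set: M i].
Proof. by have [[]] := flow_i i. Qed.

Lemma prod_act_continuous :
  continuous (fun p : GG * PM => prod_act act p.1 p.2).
Proof.
move=> p; apply/(prod_cvgP _ _) => i.
have [_ _ _ ci] := flow_i i.
have : (fun q : GG * PM => act i (q.1 i) (q.2 i)) @ nbhs p --> act i (p.1 i) (p.2 i).
  2: by [].
apply: (@continuous2_cvg _ _ _ _ _ _ (fun q : GG * PM => q.1 i)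
   (fun q : GG * PM => q.2 i) (act i) (p.1 i) (p.2 i)).
- exact: (ci (p.1 i, p.2 i)).
- move=> A nA; have nA' := (@proj_cvg _ _ p.1 i) A nA.
  exact: (@cvg_fst _ _ (nbhs p.1) (nbhs p.2) _ _ nA').
- move=> A nA; have nA' := (@proj_cvg _ _ p.2 i) A nA.
  exact: (@cvg_snd _ _ (nbhs p.1) (nbhs p.2) _ _ nA').
Qed.

Lemma prod_flow : is_flow (prod_mul mul) (prod_one one) (prod_act act).
Proof.
split.
- split.
  + exact (@hausdorff_product {classic I} M hausdorff_i).
  + have := @tychonoff {classic I} M (fun i => setT) compact_i.
    congr compact; apply/seteqP; split => //.
  + have : forall i, exists x : M i, True.
      by move=> i; have [[_ _ ?] _ _ _] := flow_i i.
    move=> /(@dchoice _ _ (fun i (x : M i) => True)) [x _]; by exists x.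
- move=> x; apply: functional_extensionality_dep => i.
  by rewrite /prod_act /prod_one; have [_ -> _ _] := flow_i i.
- move=> g h x; apply: functional_extensionality_dep => i.
  by rewrite /prod_act /prod_mul; have [_ _ -> _] := flow_i i.
- exact: prod_act_continuous.
Qed.
Lemma prod_minimal : is_minimal (prod_act act).
Proof.
move=> x; apply/seteqP; split => //.
rewrite -(prod_dense (E := fun i => range (fun g => act i g (x i)))); last first.
  by move=> i; exact: minimal_i.
apply: closureS => y hy.
have := @dchoice _ _ (fun i (g : G i) => act i g (x i) = y i).
case=> [i|g hg]; first by case: (hy i) => g _ <-; exists g.
by exists g => //; apply: functional_extensionality_dep => i; exact: hg.
Qed.


Definition iota (i : I) (c : G i) : GG :=
  @dfwith {classic I} G (prod_one one) i c.

Lemma iota_in i c : iota i c i = c.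
Proof. exact: dfwithin. Qed.
Lemma iota_out i c (k : {classic I}) : (i : {classic I}) != k -> iota i c k = one k.
Proof. exact: dfwithout. Qed.

Lemma iota_one i : iota i (one i) = prod_one one.
Proof.
apply: functional_extensionality_dep => k.
have [<-|ne] := eqVneq (i : {classic I}) (k : {classic I}); first by rewrite iota_in.
by rewrite iota_out.
Qed.

Lemma iota_mul i c d : iota i (mul i c d) = prod_mul mul (iota i c) (iota i d).
Proof.
apply: functional_extensionality_dep => k; rewrite /prod_mul.
have [<-|ne] := eqVneq (i : {classic I}) (k : {classic I}); first by rewrite !iota_in.
by rewrite !iota_out // mul1g.
Qed.

Lemma iota_comm i k c d : (i : {classic I}) != k ->
  prod_mul mul (iota i c) (iota k d) = prod_mul mul (iota k d) (iota i c).
Proof.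
move=> ik; apply: functional_extensionality_dep => l; rewrite /prod_mul.
have [<-|il] := eqVneq (i : {classic I}) (l : {classic I}).
  by rewrite iota_in iota_out 1?eq_sym // mul1g mulg1.
rewrite (@iota_out i c l il).
have [<-|kl] := eqVneq (k : {classic I}) (l : {classic I}).
  by rewrite iota_in mul1g mulg1.
by rewrite iota_out.
Qed.

Lemma iota_continuous i : continuous (iota i).
Proof. exact (@dfwith_continuous {classic I} G (prod_one one) i). Qed.


Hypothesis hsub : forall i, is_closed_subgroup (mul i) (inv i) (one i) (H i).
Hypothesis hEA : forall i, extremely_amenable_sub (mul i) (one i) (H i).

Lemma hPM : hausdorff_space PM.
Proof. by case: prod_flow => -[]. Qed.
Lemma cPM : compact [set: PM].
Proof. by case: prod_flow => -[]. Qed.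

Lemma prod_act_cont_r g : continuous (prod_act act g).
Proof.
move=> y; apply: (@continuous2_cvg _ _ _ _ (nbhs y) (nbhs_filter y) (fun _ => g) id (prod_act act) g y).
- exact (prod_act_continuous (g, y)).
- exact: cvg_cst.
- exact: cvg_id.
Qed.

Section WithY.
Variables (Y : topologicalType) (actY : GG -> Y -> Y).
Hypothesis flowY : is_flow (prod_mul mul) (prod_one one) actY.
Hypothesis minY : is_minimal actY.

Lemma hY : hausdorff_space Y. Proof. by case: flowY => -[]. Qed.
Lemma cY : compact [set: Y]. Proof. by case: flowY => -[]. Qed.
Lemma actY1 y : actY (prod_one one) y = y. Proof. by case: flowY. Qed.
Lemma actYM g h y : actY (prod_mul mul g h) y = actY g (actY h y).
Proof. by case: flowY. Qed.
Lemma actY_cont : continuous (fun p : GG * Y => actY p.1 p.2).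
Proof. by case: flowY. Qed.

Lemma H1 i : H i (one i). Proof. by case: (hsub i). Qed.
Lemma HM i x y : H i x -> H i y -> H i (mul i x y).
Proof. by case: (hsub i) => _ _ hm _; exact: hm. Qed.

Section EAstep.
Variables (A : set Y) (i : I).
Hypothesis clA : closed A.
Hypothesis neA : exists y, A y.
Hypothesis invA : forall y c, A y -> H i c -> A (actY (iota i c) y).

Let X := set_type A.

Let actX (c : G i) (x : X) : X :=
  match pselect (H i c) with
  | left hc => exist _ (actY (iota i c) (sval x))
                 (mem_set (invA _ _ (set_mem (proj2_sig x)) hc))
  | right _ => x
  end.

Let actX_val c x : H i c -> sval (actX c x) = actY (iota i c) (sval x).
Proof. by rewrite /actX; case: pselect. Qed.

Let sval_inj (x y : X) : sval x = sval y -> x = y.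
Proof. by apply: eq_sig_hprop => ? ? ?; exact: Prop_irrelevance. Qed.

Let svalA (x : X) : A (sval x).
Proof. by case: x => z hz /=; exact: set_mem hz. Qed.

Let sval_cont : continuous (sval : X -> Y).
Proof. exact: (@initial_continuous X Y sval). Qed.

Let hX : hausdorff_space X.
Proof.
move=> p q cl; apply: sval_inj; apply: hY => B C nB nC.
have [z [Bz Cz]] := cl _ _ (sval_cont p B nB) (sval_cont q C nC).
by exists (sval z).
Qed.

Let cX : compact [set: X].
Proof.
move=> F FF _.
have [y [_ cly]] := @cY ((sval : X -> Y) @ F) (fmap_proper_filter (sval : X -> Y) FF) filterT.
have Ay : A y.
  apply: clA => B nB; have FA : (sval @ F) A.
    have h : F ((sval : X -> Y) @^-1` A).
      by apply: filterS filterT => x _; exact: svalA.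
    exact: h.
  by have := cly _ _ FA nB.
exists (exist _ y (mem_set Ay)); split => // S N FS nN.
move: nN; rewrite nbhsE => -[V0 [[B oB <-] By] VN].
have FS' : F ((sval : X -> Y) @^-1` ((sval : X -> Y) @` S)).
  by apply: filterS FS => x Sx; exists x.
have [_ [[z Sz <-] Bz]] := cly _ _ FS' (open_nbhs_nbhs (conj oB By)).
by exists z; split => //; exact: VN.
Qed.

Lemma EA_step : exists y, A y /\ (forall c, H i c -> actY (iota i c) y = y).
Proof.
have nX : exists x : X, True.
  by case: neA => y Ay; exists (exist _ y (mem_set Ay)).
have act1 : forall x, actX (one i) x = x.
  move=> x; apply: sval_inj; rewrite actX_val; last exact: H1.
  by rewrite iota_one actY1.
have actM : forall g h x, H i g -> H i h -> actX (mul i g h) x = actX g (actX h x).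
  move=> g h x hg hh; apply: sval_inj.
  rewrite actX_val; last exact: HM.
  by rewrite actX_val // actX_val // iota_mul actYM.
have cont : {within H i `*` [set: X], continuous (fun p : G i * X => actX p.1 p.2)}.
  apply/subspace_continuousP => p [/= Hp _] N.
  rewrite nbhsE => -[V0 [[B oB <-] By] VN].
  pose g := fun q : G i * X => actY (iota i q.1) (sval q.2).
  have gc : g @ nbhs p --> g p.
    apply: (@continuous2_cvg _ _ _ _ _ _ (fun q : G i * X => iota i q.1)
      (fun q : G i * X => sval q.2) actY (iota i p.1) (sval p.2)).
    - exact: (actY_cont (iota i p.1, sval p.2)).
    - apply: comp_fst_cvg; exact: iota_continuous.
    - apply: comp_snd_cvg; exact: sval_cont.
  have nB : nbhs (g p) B.
    apply: open_nbhs_nbhs; split => //.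
    by rewrite /g -actX_val.
  have gB : nbhs p (g @^-1` B) := gc _ nB.
  have sub : g @^-1` B `<=` [set q | (H i `*` [set: X]) q -> N (actX q.1 q.2)].
    move=> q gq [/= Hq _]; apply: VN.
    change (B (sval (actX q.1 q.2))); by rewrite actX_val.
  exact: filterS sub gB.
have [x fx] := hEA i X actX hX cX nX act1 actM cont.
exists (sval x); split; first exact: svalA.
by move=> c hc; rewrite -actX_val // fx.
Qed.

End EAstep.


Lemma actY_cont_r g : continuous (actY g).
Proof.
move=> y; apply: (@continuous2_cvg _ _ _ _ _ _ (fun _ => g) id actY g y).
- exact (actY_cont (g, y)).
- exact: cvg_cst.
- exact: cvg_id.
Qed.

Lemma actY_cont_l y : continuous (fun g => actY g y).
Proof.
move=> g; apply: (@continuous2_cvg _ _ _ _ (nbhs g) (nbhs_filter g) id (fun _ => y) actY g y).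
- exact (actY_cont (g, y)).
- exact: cvg_id.
- exact: cvg_cst.
Qed.

Lemma closed_fix_set (f : Y -> Y) : continuous f -> closed [set y | f y = y].
Proof.
move=> cf y cly; apply: hY => B C nB nC.
have nfB : nbhs y (f @^-1` B) := cf y B nB.
have [z [fz [zf zC]]] := cly _ (filterI nfB nC).
by exists z; split => //; rewrite -fz.
Qed.

Definition Fix (i : I) := [set y | forall c, H i c -> actY (iota i c) y = y].
Definition AL (L : seq {classic I}) := [set y | forall k, k \in L -> Fix k y].

Lemma closed_Fix i : closed (Fix i).
Proof.
move=> y cl c hc; apply: (closed_fix_set _ (actY_cont_r (iota i c)) y).
by apply: closureS cl => z; exact.
Qed.

Lemma closed_AL L : closed (AL L).
Proof.
move=> y cl k kL; apply: (closed_Fix k y).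
by apply: closureS cl => z; exact.
Qed.

Lemma AL_ne L : exists y, AL L y.
Proof.
elim: L => [|k L [y hy]].
  by case: flowY => -[_ _ [y _]] _ _ _; exists y => k; rewrite in_nil.
case: (boolP (k \in L)) => kL.
  by exists y => l; rewrite in_cons => /orP [/eqP -> |]; [exact: hy| exact: hy].
have hinv : forall w c, AL L w -> H k c -> AL L (actY (iota k c) w).
  move=> w c Aw hc l lL d hd.
  have lk : (k : {classic I}) != l by apply: contraNneq kL => ->.
  rewrite -actYM -iota_comm // actYM.
  by rewrite (Aw l lL d hd).
have [z [Az Fz]] := EA_step (AL L) k (closed_AL L) (ex_intro _ y hy) hinv.
exists z => l; rewrite in_cons => /orP [/eqP -> |]; [exact: Fz | exact: Az].
Qed.

Lemma y0_exists : exists y0, forall i, Fix i y0.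
Proof.
pose F := [set B : set Y | exists L, AL L `<=` B].
have FF : ProperFilter F.
  apply: Build_ProperFilter_ex.
    by move=> P [L sL]; have [y hy] := AL_ne L; exists y; exact: sL.
  split.
  - by exists [::].
  - move=> P Q [L1 s1] [L2 s2]; exists (L1 ++ L2) => y hy; split.
      by apply: s1 => k kL; apply: hy; rewrite mem_cat kL.
    by apply: s2 => k kL; apply: hy; rewrite mem_cat kL orbT.
  - by move=> P Q PQ [L sL]; exists L => y /sL /PQ.
have [y [_ cly]] := cY F FF (@filterT _ _ FF).
exists y => i.
have : AL [:: (i : {classic I})] y.
  apply: (closed_AL _ y) => B nB.
  exact: cly (ex_intro _ [:: (i : {classic I})] (fun z h => h)) nB.
by move=> /(_ i); rewrite mem_seq1 eqxx; exact.
Qed.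


Definition Hprod : set GG := fun h => forall i, H i (h i).

Lemma fixH y0 : (forall i, Fix i y0) -> forall h, Hprod h -> actY h y0 = y0.
Proof.
move=> fy h hh.
pose hL (L : seq {classic I}) : GG :=
  fun i => if (i : {classic I}) \in L then h i else one i.
have hLfix : forall L, actY (hL L) y0 = y0.
  elim => [|k L IH].
    have -> : hL [::] = prod_one one by [].
    exact: actY1.
  pose c := if (k : {classic I}) \in L then one k else h k.
  have -> : hL (k :: L) = prod_mul mul (iota k c) (hL L).
    apply: functional_extensionality_dep => l; rewrite /prod_mul /hL.
    have [<-|kl] := eqVneq (k : {classic I}) (l : {classic I}).
      rewrite iota_in in_cons eqxx /= /c.
      by case: (k \in L); rewrite ?mul1g ?mulg1.
    by rewrite iota_out // mul1g in_cons eq_sym (negbTE kl).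
  rewrite actYM IH; apply: fy; rewrite /c; case: (_ \in _) => //; exact: H1.
apply: hY => B C nB nC; exists y0; split; last exact: nbhs_singleton.
have := actY_cont_l y0 h B nB.
move=> /nbhs_box [L [W [nW sW]]].
rewrite -(hLfix L); apply: sW => i iL; rewrite /hL iL.
exact: nbhs_singleton.
Qed.


Section Compl.
Variable jj : forall i, G i -> M i.
Hypothesis jj_eq : forall i g x, jj i (mul i g x) = act i g (jj i x).
Hypothesis jj_dense : forall i, closure (range (jj i)) = setT.
Hypothesis jj_unif : forall i (U : set (G i)), nbhs (one i) U ->
  exists E, entourage E /\ forall x y, E (jj i x, jj i y) -> in_UyH (mul i) (H i) U x y.

Definition J (g : GG) : PM := fun i => jj i (g i).

Lemma J_equiv g x : J (prod_mul mul g x) = prod_act act g (J x).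
Proof. by apply: functional_extensionality_dep => i; rewrite /J /prod_mul jj_eq. Qed.

Lemma J_dense : closure (range J) = setT.
Proof.
apply/seteqP; split => //.
rewrite -(prod_dense (E := fun i => range (jj i))) //.
apply: closureS => p hp.
have [g hg] := @dchoice _ _ (fun i (g : G i) => jj i g = p i)
  (fun i => let: ex_intro2 g _ e := hp i in ex_intro _ g e).
by exists g => //; apply: functional_extensionality_dep => i; exact: hg.
Qed.

Lemma J_unif (m : PM) (U : set GG) : nbhs (prod_one one) U ->
  exists W, nbhs m W /\ forall x y, W (J x) -> W (J y) ->
    in_UyH (prod_mul mul) Hprod U x y.
Proof.
move=> nU; have [L [Ui [nUi sU]]] := nbhs_box nU.
have : forall i, exists Wi : set (M i), nbhs (m i) Wi /\
    forall x y, Wi (jj i x) -> Wi (jj i y) -> in_UyH (mul i) (H i) (Ui i) x y.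
  move=> i; have [E [eE hE]] := jj_unif i (Ui i) (nUi i).
  pose E1 := (split_ent E `&` (split_ent E)^-1)%relation.
  exists (xsection E1 (m i)); split.
    exact: nbhs_entourage (entourage_invI (entourage_split_ent eE)).
  move=> x y /xsectionP [_ hx] /xsectionP [hy _]; apply: hE.
  exact: (entourage_split (m i)).
move=> /(@dchoice _ _ (fun i (Wi : set (M i)) => nbhs (m i) Wi /\
    forall x y, Wi (jj i x) -> Wi (jj i y) -> in_UyH (mul i) (H i) (Ui i) x y)).
case=> W hW.
exists [set p : PM | forall i, i \in L -> W i (p i)]; split.
  by apply: box_nbhs => i; case: (hW i).
move=> x y hx hy.
have : forall i, exists uh : G i * G i, ((i : {classic I}) \in L -> Ui i uh.1) /\
    H i uh.2 /\ x i = mul i uh.1 (mul i (y i) uh.2).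
  move=> i; case: (boolP ((i : {classic I}) \in L)) => iL.
    have [u [h [Uu Hh ->]]] := (hW i).2 _ _ (hx i iL) (hy i iL).
    by exists (u, h).
  exists (mul i (x i) (inv i (y i)), one i); split => //; split; first exact: H1.
  by rewrite /= mulg1 -mulA mulVg mulg1.
move=> /(@dchoice _ _ (fun i (uh : G i * G i) => ((i : {classic I}) \in L -> Ui i uh.1) /\
    H i uh.2 /\ x i = mul i uh.1 (mul i (y i) uh.2))).
case=> uh huh.
exists (fun i => (uh i).1), (fun i => (uh i).2); split.
- by apply: sU => i iL; case: (huh i) => /(_ iL).
- by move=> i; case: (huh i) => _ [].
- by apply: functional_extensionality_dep => i; case: (huh i) => _ [].
Qed.


Variable y0 : Y.
Hypothesis y0fix : forall h, Hprod h -> actY h y0 = y0.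

Definition Gam := closure (range (fun g : GG => (J g, actY g y0))).

Lemma Gam_graph g : Gam (J g, actY g y0).
Proof. by apply: subset_closure; exists g. Qed.

Lemma Gam_uniq m y1 y2 : Gam (m, y1) -> Gam (m, y2) -> y1 = y2.
Proof.
move=> G1 G2; apply: hY => B1 B2 nB1 nB2.
have nB2' : nbhs (actY (prod_one one) y2) B2 by rewrite actY1.
have := actY_cont (prod_one one, y2) _ nB2'.
case=> -[U B3] [/= nU nB3] sub.
have [W [nW hW]] := J_unif m U nU.
have nWB1 : nbhs (m, y1) (W `*` B1) by exists (W, B1).
have nWB3 : nbhs (m, y2) (W `*` B3) by exists (W, B3).
have [_ [[g1 _ <-] [/= Wg1 Bg1]]] := G1 _ nWB1.
have [_ [[g2 _ <-] [/= Wg2 Bg2]]] := G2 _ nWB3.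
have [u [h [Uu Hh e]]] := hW _ _ Wg1 Wg2.
exists (actY g1 y0); split => //.
have -> : actY g1 y0 = actY u (actY g2 y0) by rewrite e !actYM y0fix.
exact: (sub (u, actY g2 y0)).
Qed.

Lemma fst_cont (A B : topologicalType) : continuous (@fst A B).
Proof. by move=> p S nS; exact: (@cvg_fst _ _ (nbhs p.1) (nbhs p.2) _ _ nS). Qed.

Lemma Gam_total m : exists y, Gam (m, y).
Proof.
have cG : compact Gam.
  have cT : compact [set: PM * Y].
    rewrite -setXTT; apply: compact_setX; [exact: cPM | exact: cY].
  apply: (subclosed_compact _ cT) => //.
  exact: closed_closure.
have cP : compact (fst @` Gam).
  exact: continuous_compact (continuous_subspaceT (@fst_cont PM Y)) cG.
have clP : closed (fst @` Gam) := compact_closed hPM cP.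
have : (fst @` Gam) m.
  apply: clP; rewrite -/(closure _ m).
  have : closure (range J) m by rewrite J_dense.
  apply: closureS => _ [g _ <-]; exists (J g, actY g y0) => //; exact: Gam_graph.
by case=> -[m' y] Gy /= <-; exists y.
Qed.

Definition fmap_f (m : PM) : Y := xget y0 [set y | Gam (m, y)].

Lemma f_spec m : Gam (m, fmap_f m).
Proof. exact (@xgetPex _ y0 [set y | Gam (m, y)] (Gam_total m)). Qed.

Lemma f_J g : fmap_f (J g) = actY g y0.
Proof. exact: Gam_uniq (f_spec _) (Gam_graph g). Qed.

Lemma f_cont : continuous fmap_f.
Proof.
move=> m.
have sub : cluster (fmap_f @ nbhs m) `<=` [set fmap_f m].
  move=> y cly; apply/esym/(Gam_uniq m) => //; first exact: f_spec.
  apply: (@closed_closure _ _ (m, y)) => N [[W B] [/= nW nB] sWB].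
  have fW : (fmap_f @ nbhs m) (fmap_f @` W).
    by apply: filterS nW => z Wz; exists z.
  have [_ [[m' Wm' <-] Bz]] := cly _ _ fW nB.
  exists (m', fmap_f m'); split; first exact: f_spec.
  by apply: sWB; split.
apply: (@compact_cluster_set1 Y (fmap_f m) (fmap_f @ nbhs m) setT hY cY filterT).
  exact: filterT.
apply/seteqP; split => // _ ->.
have [y [_ cy]] := cY _ (fmap_proper_filter fmap_f (nbhs_pfilter m)) filterT.
by rewrite -(sub y cy).
Qed.

Lemma f_equiv g m : fmap_f (prod_act act g m) = actY g (fmap_f m).
Proof.
apply: (Gam_uniq (prod_act act g m)); first exact: f_spec.
move=> N [[W B] [/= nW nB] sWB].
have nW' := prod_act_cont_r g m W nW.
have nB' := actY_cont_r g (fmap_f m) B nB.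
have nWB : nbhs (m, fmap_f m) ((prod_act act g @^-1` W) `*` (actY g @^-1` B)).
  by exists (prod_act act g @^-1` W, actY g @^-1` B).
have [_ [[x _ <-] [/= Wx Bx]]] := f_spec m _ nWB.
exists (J (prod_mul mul g x), actY (prod_mul mul g x) y0); split.
  by exists (prod_mul mul g x).
by apply: sWB; split; rewrite /= ?J_equiv ?actYM.
Qed.

Lemma f_surj : fmap_f @` setT = setT.
Proof.
have cI : compact (fmap_f @` setT).
  exact: continuous_compact (continuous_subspaceT f_cont) cPM.
have clI := compact_closed hY cI.
apply/seteqP; split => // y _; apply: clI.
have : closure (range (fun g => actY g y0)) y by rewrite minY.
by apply: closureS => _ [g _ <-]; exists (J g) => //; exact: f_J.
Qed.

Lemma exists_map : exists f : PM -> Y, [/\ continuous f,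
    (forall g x, f (prod_act act g x) = actY g (f x)) & f @` setT = setT].
Proof. exists fmap_f; split; [exact: f_cont | exact: f_equiv | exact: f_surj]. Qed.

End Compl.
End WithY.

Hypothesis hcompl : forall i,
  is_completion_of_coset_space (mul i) (one i) (H i) (act i).

Lemma main_UMF : is_UMF (prod_mul mul) (prod_one one) (prod_act act).
Proof.
split; [exact: prod_flow | exact: prod_minimal |].
move=> Y actY flowY minY.
have [y0 fy0] := y0_exists Y actY flowY.
have y0fix := fixH Y actY flowY y0 fy0.
pose P := fun i (j : G i -> M i) =>
  (forall g x, j (mul i g x) = act i g (j x)) /\ closure (range j) = setT /\
  (forall U, nbhs (one i) U -> exists E, entourage E /\
     forall x y, E (j x, j y) -> in_UyH (mul i) (H i) U x y).
have hc : forall i, exists j, P i j.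
  by move=> i; have [j [? ? _ ?]] := hcompl i; exists j.
have [jj hjj] := @dchoice _ (fun i => G i -> M i) P hc.
apply: (exists_map Y actY flowY minY jj).
- by move=> i; case: (hjj i).
- by move=> i; case: (hjj i) => _ [].
- by move=> i; case: (hjj i) => _ [].
- exact: y0fix.
Qed.

End Main.

Theorem proposition3 (I : Type) (G : I -> topologicalType)
    (mul : forall i, G i -> G i -> G i) (inv : forall i, G i -> G i)
    (one : forall i, G i) (H : forall i, set (G i))
    (M : I -> uniformType) (act : forall i, G i -> M i -> M i) :
  (forall i, is_top_group (mul i) (inv i) (one i)) ->
  (forall i, hausdorff_space (G i)) ->
  (forall i, is_closed_subgroup (mul i) (inv i) (one i) (H i)) ->
  (forall i, extremely_amenable_sub (mul i) (one i) (H i)) ->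
  (forall i, co_precompact (mul i) (one i) (H i)) ->
  (forall i, is_UMF (mul i) (one i) (act i)) ->
  (forall i, is_completion_of_coset_space (mul i) (one i) (H i) (act i)) ->
  is_UMF (prod_mul mul) (prod_one one) (prod_act act).
Proof.
move=> hgrp _ hsub hEA _ hUMF hcompl.
exact: (main_UMF I G mul inv one H M act hgrp hUMF hsub hEA hcompl).
Qed.
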